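(* The operator $\widetilde{R}$ is well-defined on circuits modulo $A$: for all circuits $c,d:a\to b$, if $c$ and $d$ are equal modulo $A$, then $\widetilde{R}[c]$ and $\widetilde{R}[d]$ are equal modulo $A$.
   Context: A circuit is a morphism of the free symmetric strict monoidal category whose objects are natural numbers (tensor = addition) generated by $\mathsf{discard}:1\to 0$, $\mathsf{copy}:1\to 2$, $\mathsf{zero}:0\to1$, $\mathsf{add}:2\to1$, $\mathsf{one}:0\to 1$, $\mathsf{and}:2\to 1$. Composition is diagrammatic ($f;g$ = first $f$ then $g$), $\sigma_{m,n}$ is the symmetry $m+n\to n+m$ ($\sigma=\sigma_{1,1}$), $\mathsf{copy}_n:n\to 2n$, $\mathsf{discard}_n:n\to0$ are the evident composites. $A$ is the set of equations: $\mathsf{copy};\sigma=\mathsf{copy}$; $\mathsf{copy};(\mathsf{copy}\otimes \mathrm{id}_1)=\mathsf{copy};(\mathrm{id}_1\otimes\mathsf{copy})$; $\mathsf{copy};(\mathsf{discard}\otimes\mathrm{id}_1)=\mathrm{id}_1$; for every circuit $f:a\to b$, $f;\mathsf{copy}_b=\mathsf{copy}_a;(f\otimes f)$ and $f;\mathsf{discard}_b=\mathsf{discard}_a$; commutativity, associativity and unit laws for $(\mathsf{add},\mathsf{zero})$ and for $(\mathsf{and},\mathsf{one})$; $\mathsf{copy};\mathsf{add}=\mathsf{discard};\mathsf{zero}$; and distributivity $(\mathrm{id}_1\otimes\mathsf{add});\mathsf{and}=(\mathsf{copy}\otimes\mathrm{id}_2);(\mathrm{id}_1\otimes\sigma\otimes\mathrm{id}_1);(\mathsf{and}\otimes\mathsf{and});\mathsf{add}$.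 ''Equal modulo $A$'' means related by the smallest congruence (w.r.t. composition and tensor, and including the symmetric monoidal laws) containing $A$. For each circuit $f:a\to b$ the circuit $\widetilde{R}[f]:a+b\to a$ is defined inductively (it is the syntactic reverse derivative, computing $(x,\delta)\mapsto J_f(x)^{T}\delta$): on generators, $\widetilde{R}[\mathsf{discard}]=\mathsf{discard};\mathsf{zero}$; $\widetilde{R}[\mathsf{copy}]=\mathsf{discard}\otimes\mathsf{add}$; $\widetilde{R}[\mathsf{zero}]=\mathsf{discard}$; $\widetilde{R}[\mathsf{one}]=\mathsf{discard}$; $\widetilde{R}[\mathsf{add}]=\mathsf{discard}\otimes\mathsf{discard}\otimes\mathsf{copy}$; $\widetilde{R}[\mathsf{and}]=(\sigma\otimes\mathsf{copy});(\mathrm{id}_1\otimes\sigma\otimes\mathrm{id}_1);(\mathsf{and}\otimes\mathsf{and})$ (i.e. $(x_1,x_2,\delta)\mapsto(x_2\delta,x_1\delta)$); on identities and symmetries, $\widetilde{R}[\mathrm{id}_n]=\mathsf{discard}_n\otimes\mathrm{id}_n$ and $\widetilde{R}[\sigma_{m,n}]=\mathsf{discard}_{m+n}\otimes\sigma_{n,m}$; for $f:a\to b$, $g:b\to c$, $\widetilde{R}[f;g]=(\mathsf{copy}_a\otimes\mathrm{id}_c);(\mathrm{id}_a\otimes f\otimes \mathrm{id}_c);(\mathrm{id}_a\otimes\widetilde{R}[g]);\widetilde{R}[f]$; for $f:a\to b$, $g:c\to d$, $\widetilde{R}[f\otimes g]=(\mathrm{id}_a\otimes\sigma_{c,b}\otimes\mathrm{id}_d);(\widetilde{R}[f]\otimes\widetilde{R}[g])$.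 *)

(* Defs.v *)
(* Circuits = terms of the free symmetric strict monoidal category
   (objects: nat, tensor = +) on the given generators, presented as raw syntax
   with computed domain/codomain and a well-typedness predicate. *)
From Stdlib Require Import Arith.

Inductive gen : Type :=
| g_discard | g_copy | g_zero
| g_add | g_one | g_and .

Definition gen_dom (x : gen) : nat :=
  match x with
  | g_discard => 1 | g_copy => 1 | g_zero => 0
  | g_add => 2 | g_one => 0 | g_and => 2
  end.

Definition gen_cod (x : gen) : nat :=
  match x with
  | g_discard => 0 | g_copy => 2 | g_zero => 1
  | g_add => 1 | g_one => 1 | g_and => 1
  end.

Inductive circ : Type :=
| Gen  : gen -> circ
| Id   : nat -> circ
| Sym  : nat -> nat -> circ
| Comp : circ -> circ -> circ        (* f ; g  (diagrammatic) *)
| Tens : circ -> circ -> circ.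

Fixpoint dom (f : circ) : nat :=
  match f with
  | Gen x => gen_dom x
  | Id n => n
  | Sym m n => m + n
  | Comp f _ => dom f
  | Tens f g => dom f + dom g
  end.

Fixpoint cod (f : circ) : nat :=
  match f with
  | Gen x => gen_cod x
  | Id n => n
  | Sym m n => n + m
  | Comp _ g => cod g
  | Tens f g => cod f + cod g
  end.

Fixpoint wt (f : circ) : Prop :=
  match f with
  | Gen _ | Id _ | Sym _ _ => True
  | Comp f g => wt f /\ wt g /\ cod f = dom g
  | Tens f g => wt f /\ wt g
  end.

Definition is_circuit (a b : nat) (f : circ) : Prop :=
  wt f /\ dom f = a /\ cod f = b.

Notation discard := (Gen g_discard).
Notation copy := (Gen g_copy).
Notation zero := (Gen g_zero).
Notation add := (Gen g_add).
Notation one := (Gen g_one).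
Notation and_g := (Gen g_and).
Notation sigma := (Sym 1 1).

(* copy_n : n -> n+n, (x) |-> (x, x) *)
Fixpoint copy_n (n : nat) : circ :=
  match n with
  | 0 => Id 0
  | S n => Comp (Tens copy (copy_n n)) (Tens (Tens (Id 1) (Sym 1 n)) (Id n))
  end.

Fixpoint discard_n (n : nat) : circ :=
  match n with
  | 0 => Id 0
  | S n => Tens discard (discard_n n)
  end.

Inductive ax : circ -> circ -> Prop :=
| ax_assoc f g h : ax (Comp (Comp f g) h) (Comp f (Comp g h))
| ax_idl f : ax (Comp (Id (dom f)) f) f
| ax_idr f : ax (Comp f (Id (cod f))) f
| ax_interchange f g h k : ax (Tens (Comp f g) (Comp h k)) (Comp (Tens f h) (Tens g k))
| ax_tens_id m n : ax (Tens (Id m) (Id n)) (Id (m + n))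
| ax_tens_assoc f g h : ax (Tens (Tens f g) h) (Tens f (Tens g h))
| ax_tens_unitl f : ax (Tens (Id 0) f) f
| ax_tens_unitr f : ax (Tens f (Id 0)) f
| ax_sym_inv m n : ax (Comp (Sym m n) (Sym n m)) (Id (m + n))
| ax_sym_nat f g : ax (Comp (Tens f g) (Sym (cod f) (cod g)))
                      (Comp (Sym (dom f) (dom g)) (Tens g f))
| ax_sym_hex1 m n p : ax (Sym m (n + p)) (Comp (Tens (Sym m n) (Id p)) (Tens (Id n) (Sym m p)))
| ax_sym_hex2 m n p : ax (Sym (m + n) p) (Comp (Tens (Id m) (Sym n p)) (Tens (Sym m p) (Id n)))
| ax_sym_unitl n : ax (Sym 0 n) (Id n)
| ax_sym_unitr n : ax (Sym n 0) (Id n)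
| A_copy_comm : ax (Comp copy sigma) copy
| A_copy_assoc : ax (Comp copy (Tens copy (Id 1))) (Comp copy (Tens (Id 1) copy))
| A_copy_unit : ax (Comp copy (Tens discard (Id 1))) (Id 1)
| A_copy_nat f : ax (Comp f (copy_n (cod f))) (Comp (copy_n (dom f)) (Tens f f))
| A_discard_nat f : ax (Comp f (discard_n (cod f))) (discard_n (dom f))
| A_add_comm : ax (Comp sigma add) add
| A_add_assoc : ax (Comp (Tens add (Id 1)) add) (Comp (Tens (Id 1) add) add)
| A_add_unitl : ax (Comp (Tens zero (Id 1)) add) (Id 1)
| A_add_unitr : ax (Comp (Tens (Id 1) zero) add) (Id 1)
| A_and_comm : ax (Comp sigma and_g) and_g
| A_and_assoc : ax (Comp (Tens and_g (Id 1)) and_g) (Comp (Tens (Id 1) and_g) and_g)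
| A_and_unitl : ax (Comp (Tens one (Id 1)) and_g) (Id 1)
| A_and_unitr : ax (Comp (Tens (Id 1) one) and_g) (Id 1)
| A_copy_add : ax (Comp copy add) (Comp discard zero)
| A_distr : ax (Comp (Tens (Id 1) add) and_g)
               (Comp (Comp (Comp (Tens copy (Id 2)) (Tens (Tens (Id 1) sigma) (Id 1)))
                           (Tens and_g and_g)) add).

(* Equality modulo A: the smallest congruence (w.r.t. ; and (x)) on well-typed
   circuits, relating only circuits of the same type, containing the laws above
   (all instances in which both sides are well-typed circuits of the same type). *)
Inductive eqA : circ -> circ -> Prop :=
| eqA_ax f g : ax f g -> wt f -> wt g -> dom f = dom g -> cod f = cod g -> eqA f g
| eqA_refl f : wt f -> eqA f f
| eqA_sym f g : eqA f g -> eqA g f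
| eqA_trans f g h : eqA f g -> eqA g h -> eqA f h
| eqA_comp f f' g g' : eqA f f' -> eqA g g' -> cod f = dom g -> eqA (Comp f g) (Comp f' g')
| eqA_tens f f' g g' : eqA f f' -> eqA g g' -> eqA (Tens f g) (Tens f' g').

(* The syntactic reverse derivative  R[f] : dom f + cod f -> dom f. *)
Definition R_gen (x : gen) : circ :=
  match x with
  | g_discard => Comp discard zero
  | g_copy => Tens discard add
  | g_zero => discard
  | g_one => discard
  | g_add => Tens (Tens discard discard) copy
  | g_and => Comp (Comp (Tens sigma copy) (Tens (Tens (Id 1) sigma) (Id 1))) (Tens and_g and_g)
  end.

Fixpoint Rt (f : circ) : circ :=
  match f with
  | Gen x => R_gen x
  | Id n => Tens (discard_n n) (Id n)
  | Sym m n => Tens (discard_n (m + n)) (Sym n m)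
  | Comp f g =>
      let a := dom f in let c := cod g in
      Comp (Comp (Comp (Tens (copy_n a) (Id c)) (Tens (Tens (Id a) f) (Id c)))
                 (Tens (Id a) (Rt g)))
           (Rt f)
  | Tens f g =>
      let a := dom f in let b := cod f in let c := dom g in let d := cod g in
      Comp (Tens (Tens (Id a) (Sym c b)) (Id d)) (Tens (Rt f) (Rt g))
  end.

(* Main.v *)
Require Import Defs.
From Stdlib Require Import Arith Lia Setoid Morphisms Ring.


Inductive tm : Type := V (i : nat) | Zr | On | Ad (s t : tm) | Mu (s t : tm).

Inductive E : tm -> tm -> Prop :=
| E_refl t : E t t
| E_sym s t : E s t -> E t s
| E_trans s t u : E s t -> E t u -> E s u
| E_Ad s s' t t' : E s s' -> E t t' -> E (Ad s t) (Ad s' t')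
| E_Mu s s' t t' : E s s' -> E t t' -> E (Mu s t) (Mu s' t')
| E_add0 t : E (Ad Zr t) t
| E_addC s t : E (Ad s t) (Ad t s)
| E_addA s t u : E (Ad (Ad s t) u) (Ad s (Ad t u))
| E_mul1 t : E (Mu On t) t
| E_mulC s t : E (Mu s t) (Mu t s)
| E_mulA s t u : E (Mu (Mu s t) u) (Mu s (Mu t u))
| E_distr s t u : E (Mu s (Ad t u)) (Ad (Mu s t) (Mu s u))
| E_char2 t : E (Ad t t) Zr.

#[export] Instance E_Equiv : Equivalence E.
Proof. split; [intro; apply E_refl | intros ??; apply E_sym | intros ???; apply E_trans]. Qed.
#[export] Instance Ad_Proper : Proper (E ==> E ==> E) Ad.
Proof. intros ?? H ?? H'; apply E_Ad; auto. Qed.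
#[export] Instance Mu_Proper : Proper (E ==> E ==> E) Mu.
Proof. intros ?? H ?? H'; apply E_Mu; auto. Qed.

Definition tid (x : tm) := x.
#[export] Instance tid_Proper : Proper (E ==> E) tid.
Proof. intros ?? H; exact H. Qed.

Lemma tm_ring : ring_theory Zr On Ad Mu Ad tid E.
Proof.
  split; intros; unfold tid.
  - apply E_add0.
  - apply E_addC.
  - symmetry; apply E_addA.
  - apply E_mul1.
  - apply E_mulC.
  - symmetry; apply E_mulA.
  - rewrite E_mulC, E_distr, (E_mulC z x), (E_mulC z y). reflexivity.
  - reflexivity.
  - apply E_char2.
Qed.

Lemma tm_eq_ext : ring_eq_ext Ad Mu tid E.
Proof. split; auto with typeclass_instances. Qed.

Add Ring tmR : tm_ring (setoid E_Equiv tm_eq_ext).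

Fixpoint subst (s : nat -> tm) (t : tm) : tm :=
  match t with
  | V i => s i | Zr => Zr | On => On
  | Ad a b => Ad (subst s a) (subst s b)
  | Mu a b => Mu (subst s a) (subst s b)
  end.

Fixpoint vb (n : nat) (t : tm) : Prop :=
  match t with
  | V i => i < n | Zr | On => True
  | Ad a b | Mu a b => vb n a /\ vb n b
  end.

Lemma subst_subst s r t : subst s (subst r t) = subst (fun i => subst s (r i)) t.
Proof. induction t; simpl; congruence. Qed.

Lemma subst_ext_vb n s r t : vb n t -> (forall i, i < n -> s i = r i) -> subst s t = subst r t.
Proof. induction t; simpl; intros; try tauto; f_equal; firstorder. Qed.

Lemma subst_extE n s r t : vb n t -> (forall i, i < n -> E (s i) (r i)) -> E (subst s t) (subst r t).
Proof. induction t; simpl; intros; try reflexivity; try (apply H0; auto; fail);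
  destruct H; [rewrite IHt1, IHt2 by auto | rewrite IHt1, IHt2 by auto]; reflexivity. Qed.

Lemma subst_extE_all s r t : (forall i, E (s i) (r i)) -> E (subst s t) (subst r t).
Proof. induction t; simpl; intros; try reflexivity; auto; rewrite IHt1, IHt2 by auto; reflexivity. Qed.

Lemma subst_E s t t' : E t t' -> E (subst s t) (subst s t').
Proof. induction 1; simpl; try (constructor; fail); eauto using E_trans, E_sym, E_Ad, E_Mu; constructor. Qed.

Lemma subst_V t : subst V t = t.
Proof. induction t; simpl; congruence. Qed.

Lemma subst_id_vb n s t : vb n t -> (forall i, i < n -> s i = V i) -> subst s t = t.
Proof. intros. rewrite (subst_ext_vb n s V t); auto. apply subst_V. Qed.

Lemma vb_mono n m t : vb n t -> n <= m -> vb m t.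
Proof. induction t; simpl; intuition lia. Qed.

Lemma vb_subst n m s t : vb n t -> (forall i, i < n -> vb m (s i)) -> vb m (subst s t).
Proof. induction t; simpl; intuition. Qed.

Fixpoint deriv (i : nat) (t : tm) : tm :=
  match t with
  | V k => if k =? i then On else Zr
  | Zr | On => Zr
  | Ad a b => Ad (deriv i a) (deriv i b)
  | Mu a b => Ad (Mu (deriv i a) b) (Mu a (deriv i b))
  end.

Lemma deriv_E i t t' : E t t' -> E (deriv i t) (deriv i t').
Proof.
  induction 1; simpl.
  - reflexivity.
  - symmetry; auto.
  - etransitivity; eauto.
  - rewrite IHE1, IHE2; reflexivity.
  - rewrite IHE1, IHE2, H, H0; reflexivity.
  - ring. - ring. - ring. - ring. - ring. - ring. - ring.
  - apply E_char2.
Qed.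

Lemma vb_deriv n i t : vb n t -> vb n (deriv i t).
Proof. induction t; simpl; try destruct (_ =? _); simpl; intuition. Qed.

Lemma deriv_out n i t : vb n t -> n <= i -> E (deriv i t) Zr.
Proof.
  induction t; simpl; intros.
  - destruct (Nat.eqb_spec i0 i); [lia|reflexivity].
  - reflexivity. - reflexivity.
  - destruct H; rewrite IHt1, IHt2 by auto; ring.
  - destruct H; rewrite IHt1, IHt2 by auto; ring.
Qed.

Fixpoint sumT (m : nat) (f : nat -> tm) : tm :=
  match m with 0 => Zr | S m => Ad (sumT m f) (f m) end.

Lemma sumT_extE m f g : (forall j, j < m -> E (f j) (g j)) -> E (sumT m f) (sumT m g).
Proof. induction m; simpl; intros; [reflexivity|]. rewrite IHm, H by (auto; lia); reflexivity. Qed.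

Lemma sumT_ext m f g : (forall j, j < m -> f j = g j) -> sumT m f = sumT m g.
Proof. induction m; simpl; intros; [reflexivity|]. rewrite IHm, H by (auto; lia); reflexivity. Qed.

Lemma sumT_add m f g : E (sumT m (fun j => Ad (f j) (g j))) (Ad (sumT m f) (sumT m g)).
Proof. induction m; simpl; [ring|]. rewrite IHm; ring. Qed.

Lemma sumT_mul_l m a f : E (sumT m (fun j => Mu a (f j))) (Mu a (sumT m f)).
Proof. induction m; simpl; [ring|]. rewrite IHm; ring. Qed.

Lemma sumT_mul_r m a f : E (sumT m (fun j => Mu (f j) a)) (Mu (sumT m f) a).
Proof. induction m; simpl; [ring|]. rewrite IHm; ring. Qed.

Lemma sumT_zero m f : (forall j, j < m -> E (f j) Zr) -> E (sumT m f) Zr.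
Proof. induction m; simpl; intros; [reflexivity|]. rewrite IHm, H by (auto; lia); ring. Qed.

Lemma sumT_exch m k f : E (sumT m (fun j => sumT k (f j))) (sumT k (fun l => sumT m (fun j => f j l))).
Proof.
  induction m; simpl.
  - symmetry; apply sumT_zero; reflexivity.
  - rewrite IHm. rewrite <- sumT_add. reflexivity.
Qed.

Lemma sumT_split p q f : E (sumT (p + q) f) (Ad (sumT p f) (sumT q (fun j => f (p + j)))).
Proof.
  induction q; simpl.
  - rewrite Nat.add_0_r; ring.
  - rewrite Nat.add_succ_r; simpl. rewrite IHq; ring.
Qed.

Lemma sumT_delta m f k0 : k0 < m -> (forall j, j < m -> j <> k0 -> E (f j) Zr) -> E (sumT m f) (f k0).
Proof.
  induction m; simpl; intros; [lia|].
  destruct (Nat.eq_dec k0 m).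
  - subst. rewrite (sumT_zero m f); [ring|]. intros; apply H0; lia.
  - rewrite IHm by (auto; lia). rewrite (H0 m) by lia. ring.
Qed.


Lemma eqA_wt f g : eqA f g -> wt f /\ wt g /\ dom f = dom g /\ cod f = cod g.
Proof.
  induction 1; simpl; intuition congruence.
Qed.

Definition eqW (f g : circ) : Prop :=
  dom f = dom g /\ cod f = cod g /\ (wt f -> eqA f g) /\ (wt g -> eqA f g).

#[export] Instance eqW_Equiv : Equivalence eqW.
Proof.
  split.
  - intro f; repeat split; intros; apply eqA_refl; auto.
  - intros f g (H1 & H2 & H3 & H4); repeat split; auto; intros; apply eqA_sym; auto.
  - intros f g h (H1 & H2 & H3 & H4) (K1 & K2 & K3 & K4); repeat split; try congruence.
    + intro w. pose proof (H3 w) as e. destruct (eqA_wt _ _ e) as (_ & wg & _).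
      eapply eqA_trans; eauto.
    + intro w. pose proof (K4 w) as e. destruct (eqA_wt _ _ e) as (wg & _ & _).
      eapply eqA_trans; eauto.
Qed.

#[export] Instance Comp_Proper : Proper (eqW ==> eqW ==> eqW) Comp.
Proof.
  intros f f' (H1 & H2 & H3 & H4) g g' (K1 & K2 & K3 & K4); repeat split; simpl; auto.
  - intros (wf & wg & e). apply eqA_comp; auto.
  - intros (wf & wg & e). apply eqA_comp; auto. congruence.
Qed.

#[export] Instance Tens_Proper : Proper (eqW ==> eqW ==> eqW) Tens.
Proof.
  intros f f' (H1 & H2 & H3 & H4) g g' (K1 & K2 & K3 & K4); repeat split; simpl; try congruence.
  - intros (wf & wg). apply eqA_tens; auto.
  - intros (wf & wg). apply eqA_tens; auto.
Qed.

Lemma eqW_eqA f g : eqW f g -> wt f -> eqA f g.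
Proof. intros (_ & _ & H & _); auto. Qed.

Lemma axW f g : ax f g -> dom f = dom g -> cod f = cod g -> (wt f -> wt g) -> (wt g -> wt f) -> eqW f g.
Proof. intros; repeat split; auto; intros; apply eqA_ax; auto. Qed.

Lemma dom_copy_n n : dom (copy_n n) = n.
Proof. induction n; simpl; auto. Qed.
Lemma cod_copy_n n : cod (copy_n n) = n + n.
Proof. induction n; simpl; auto. lia. Qed.
Lemma wt_copy_n n : wt (copy_n n).
Proof. induction n; simpl; auto. rewrite cod_copy_n; repeat split; auto; lia. Qed.
Lemma dom_discard_n n : dom (discard_n n) = n.
Proof. induction n; simpl; auto. Qed.
Lemma cod_discard_n n : cod (discard_n n) = 0.
Proof. induction n; simpl; auto. Qed.
Lemma wt_discard_n n : wt (discard_n n).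
Proof. induction n; simpl; auto. Qed.

#[export] Hint Resolve wt_copy_n wt_discard_n : wtdb.
#[export] Hint Rewrite dom_copy_n cod_copy_n dom_discard_n cod_discard_n : dcdb.

Ltac dc := simpl; autorewrite with dcdb in *; simpl; lia.
Ltac wtac := simpl; autorewrite with dcdb; repeat split; auto with wtdb; try lia.

Lemma W_assoc f g h : eqW (Comp (Comp f g) h) (Comp f (Comp g h)).
Proof. apply axW; [constructor|simpl; auto..]; intuition. Qed.

Lemma W_idl n f : dom f = n -> eqW (Comp (Id n) f) f.
Proof. intros <-. apply axW; [constructor|simpl; auto..]; intuition. Qed.

Lemma W_idr n f : cod f = n -> eqW (Comp f (Id n)) f.
Proof. intros <-. apply axW; [constructor|simpl; auto..]; intuition. Qed.

Lemma W_inter f g h k : cod f = dom g -> cod h = dom k ->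
  eqW (Tens (Comp f g) (Comp h k)) (Comp (Tens f h) (Tens g k)).
Proof. intros. apply axW; [constructor|simpl; auto..]; intuition. Qed.

Lemma W_tens_id m n : eqW (Tens (Id m) (Id n)) (Id (m + n)).
Proof. apply axW; [constructor|simpl; auto..]. Qed.

Lemma W_tassoc f g h : eqW (Tens (Tens f g) h) (Tens f (Tens g h)).
Proof. apply axW; [constructor|simpl; try lia..]; intuition. Qed.

Lemma W_unitl f : eqW (Tens (Id 0) f) f.
Proof. apply axW; [constructor|simpl; auto..]; intuition. Qed.

Lemma W_unitr f : eqW (Tens f (Id 0)) f.
Proof. apply axW; [constructor|simpl; try lia..]; intuition. Qed.

Lemma W_sym_nat f g p q r s : cod f = p -> cod g = q -> dom f = r -> dom g = s ->
  eqW (Comp (Tens f g) (Sym p q)) (Comp (Sym r s) (Tens g f)).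
Proof. intros <- <- <- <-. apply axW; [constructor|simpl; try lia..]; intuition lia. Qed.

Lemma W_sym_unitl n : eqW (Sym 0 n) (Id n).
Proof. apply axW; [constructor|simpl; try lia..]; intuition. Qed.

Lemma W_sym_unitr n : eqW (Sym n 0) (Id n).
Proof. apply axW; [constructor|simpl; try lia..]; intuition. Qed.

Lemma W_copy_nat f n m : wt f -> dom f = n -> cod f = m ->
  eqW (Comp f (copy_n m)) (Comp (copy_n n) (Tens f f)).
Proof. intros w <- <-. apply axW; [constructor|..]; wtac. Qed.

Lemma W_discard_nat f n m : wt f -> dom f = n -> cod f = m ->
  eqW (Comp f (discard_n m)) (discard_n n).
Proof. intros w <- <-. apply axW; [constructor|..]; wtac. Qed.

Lemma W_ax f g : ax f g -> wt f -> wt g -> dom f = dom g -> cod f = cod g -> eqW f g.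
Proof. intros; apply axW; auto. Qed.

Ltac Wax := apply W_ax; [constructor | wtac .. ].

Lemma W_d1 : eqW (discard_n 1) discard.
Proof. simpl. apply W_unitr. Qed.

Lemma W_dadd p q : eqW (discard_n (p + q)) (Tens (discard_n p) (discard_n q)).
Proof.
  induction p; simpl.
  - symmetry; apply W_unitl.
  - rewrite IHp. symmetry; apply W_tassoc.
Qed.

Definition pair (n : nat) (f g : circ) : circ := Comp (copy_n n) (Tens f g).

#[export] Instance pair_Proper n : Proper (eqW ==> eqW ==> eqW) (pair n).
Proof. intros ?? H ?? H'. unfold pair. rewrite H, H'. reflexivity. Qed.

Lemma K1 h f g k n : wt h -> dom h = k -> cod h = n -> dom f = n -> dom g = n ->
  eqW (Comp h (pair n f g)) (pair k (Comp h f) (Comp h g)).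
Proof.
  intros. unfold pair. rewrite <- W_assoc. rewrite W_copy_nat by eauto.
  rewrite W_assoc. rewrite <- W_inter by congruence. reflexivity.
Qed.

Lemma K2 n f g h k : cod f = dom h -> cod g = dom k ->
  eqW (Comp (pair n f g) (Tens h k)) (pair n (Comp f h) (Comp g k)).
Proof. intros. unfold pair. rewrite W_assoc, <- W_inter by auto. reflexivity. Qed.


Lemma W_copy_unit : eqW (Comp copy (Tens discard (Id 1))) (Id 1).
Proof. Wax. Qed.
Lemma W_copy_comm : eqW (Comp copy sigma) copy.
Proof. Wax. Qed.

Lemma W_copy_unitr : eqW (Comp copy (Tens (Id 1) discard)) (Id 1).
Proof.
  rewrite <- W_copy_comm at 1. rewrite W_assoc.
  rewrite <- (W_sym_nat discard (Id 1) 0 1 1 1) by reflexivity.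
  rewrite W_sym_unitl, W_idr by reflexivity. apply W_copy_unit.
Qed.

Lemma C2 n : eqW (Comp (copy_n n) (Tens (discard_n n) (Id n))) (Id n).
Proof.
  induction n.
  - simpl. rewrite W_idl by reflexivity. apply W_unitl.
  - simpl. rewrite W_assoc.
    assert (M: eqW (Comp (Tens (Tens (Id 1) (Sym 1 n)) (Id n)) (Tens (Tens discard (discard_n n)) (Id (S n))))
                   (Tens (Tens discard (Id 1)) (Tens (discard_n n) (Id n)))).
    { rewrite (W_tassoc (Id 1) (Sym 1 n) (Id n)).
      rewrite (W_tassoc discard (discard_n n) (Id (S n))).
      change (Id (S n)) with (Id (1 + n)). rewrite <- (W_tens_id 1 n).
      rewrite <- (W_tassoc (discard_n n) (Id 1) (Id n)).
      rewrite <- W_inter by dc. rewrite <- W_inter by dc.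
      rewrite <- (W_sym_nat (Id 1) (discard_n n) 1 0 1 n) by dc.
      rewrite W_sym_unitr, W_idr by dc. rewrite W_idl by dc. rewrite W_idl by dc.
      rewrite (W_tassoc (Id 1) (discard_n n) (Id n)).
      symmetry. apply W_tassoc. }
    rewrite M. rewrite <- W_inter by dc. rewrite IHn, W_copy_unit. apply W_tens_id.
Qed.

Lemma SP p q : eqW (Id (p + q)) (pair (p + q) (Tens (Id p) (discard_n q)) (Tens (discard_n p) (Id q))).
Proof.
  induction p.
  - simpl. unfold pair. rewrite W_unitl, W_unitl. symmetry; apply C2.
  - unfold pair in *. simpl. rewrite W_assoc.
    set (A := Tens (Id p) (discard_n q)).
    assert (M: eqW (Comp (Tens (Tens (Id 1) (Sym 1 (p + q))) (Id (p + q)))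
                      (Tens (Tens (Id (S p)) (discard_n q)) (Tens (Tens discard (discard_n p)) (Id q))))
                   (Tens (Tens (Id 1) discard) (Tens A (Tens (discard_n p) (Id q))))).
    { rewrite (W_tassoc (Id 1) (Sym 1 (p + q)) (Id (p + q))).
      change (Id (S p)) with (Id (1 + p)). rewrite <- (W_tens_id 1 p).
      rewrite (W_tassoc (Id 1) (Id p) (discard_n q)). fold A.
      rewrite (W_tassoc (Id 1) A).
      rewrite (W_tassoc discard (discard_n p) (Id q)).
      rewrite <- (W_tassoc A discard).
      rewrite <- W_inter by (subst A; dc). rewrite <- W_inter by (subst A; dc).
      rewrite <- (W_sym_nat discard A 0 p 1 (p + q)) by (subst A; dc).
      rewrite W_sym_unitl, W_idr by (subst A; dc). rewrite W_idl by dc. rewrite W_idr by (subst A; dc).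
      rewrite W_tassoc. rewrite <- W_tassoc. reflexivity. }
    rewrite M. rewrite <- W_inter by (subst A; dc). subst A. rewrite <- IHp, W_copy_unitr. symmetry; apply (W_tens_id 1 (p+q)).
Qed.

Lemma C1 n : eqW (Comp (copy_n n) (Tens (Id n) (discard_n n))) (Id n).
Proof.
  pose proof (SP n 0) as H. rewrite Nat.add_0_r in H. unfold pair in H.
  simpl in H. rewrite !W_unitr in H. symmetry; exact H.
Qed.

Lemma PD_r n f : dom f = n -> eqW (pair n f (discard_n n)) f.
Proof.
  intros Hf. unfold pair.
  transitivity (Comp (copy_n n) (Comp (Tens (Id n) (discard_n n)) (Tens f (Id 0)))).
  - apply Comp_Proper; [reflexivity|]. rewrite <- W_inter by dc.
    rewrite W_idl, W_idr by dc. reflexivity.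
  - rewrite <- W_assoc, C1, W_idl by dc. apply W_unitr.
Qed.

Lemma PD_l n g : dom g = n -> eqW (pair n (discard_n n) g) g.
Proof.
  intros Hg. unfold pair.
  transitivity (Comp (copy_n n) (Comp (Tens (discard_n n) (Id n)) (Tens (Id 0) g))).
  - apply Comp_Proper; [reflexivity|]. rewrite <- W_inter by dc.
    rewrite W_idl, W_idr by dc. reflexivity.
  - rewrite <- W_assoc, C2, W_idl by dc. apply W_unitl.
Qed.

Lemma K4a n f g p q : wt g -> dom f = n -> dom g = n -> cod f = p -> cod g = q ->
  eqW (Comp (pair n f g) (Tens (Id p) (discard_n q))) f.
Proof.
  intros. rewrite K2 by dc. rewrite W_idr by auto. rewrite (W_discard_nat g n q) by auto.
  apply PD_r; auto.
Qed.

Lemma K4b n f g p q : wt f -> dom f = n -> dom g = n -> cod f = p -> cod g = q ->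
  eqW (Comp (pair n f g) (Tens (discard_n p) (Id q))) g.
Proof.
  intros. rewrite K2 by dc. rewrite (W_idr q g) by auto. rewrite (W_discard_nat f n p) by auto.
  apply PD_l; auto.
Qed.

Lemma U X n p q : wt X -> dom X = n -> cod X = p + q ->
  eqW X (pair n (Comp X (Tens (Id p) (discard_n q))) (Comp X (Tens (discard_n p) (Id q)))).
Proof.
  intros. transitivity (Comp X (Id (p + q))). { symmetry; apply W_idr; auto. }
  rewrite SP at 1. apply K1; auto; dc.
Qed.

Definition proj (n i : nat) : circ := Tens (Tens (discard_n i) (Id 1)) (discard_n (n - i - 1)).

Fixpoint realize (n : nat) (t : tm) : circ :=
  match t with
  | V i => if i <? n then proj n i else Comp (discard_n n) zero
  | Zr => Comp (discard_n n) zero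
  | On => Comp (discard_n n) one
  | Ad s u => Comp (pair n (realize n s) (realize n u)) add
  | Mu s u => Comp (pair n (realize n s) (realize n u)) and_g
  end.

Fixpoint RT (n m : nat) (F : nat -> tm) : circ :=
  match m with
  | 0 => discard_n n
  | S m => pair n (realize n (F 0)) (RT n m (fun j => F (S j)))
  end.

Lemma proj_dc n i : i < n -> dom (proj n i) = n /\ cod (proj n i) = 1 /\ wt (proj n i).
Proof. intros; unfold proj; simpl; autorewrite with dcdb; repeat split; auto with wtdb; lia. Qed.

Lemma realize_dc n t : dom (realize n t) = n /\ cod (realize n t) = 1 /\ wt (realize n t).
Proof.
  induction t; simpl.
  - destruct (Nat.ltb_spec i n); [apply proj_dc; auto|]. simpl; autorewrite with dcdb; auto with wtdb.
  - autorewrite with dcdb; auto with wtdb.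
  - autorewrite with dcdb; auto with wtdb.
  - unfold pair; simpl; autorewrite with dcdb; intuition (try lia; auto with wtdb).
  - unfold pair; simpl; autorewrite with dcdb; intuition (try lia; auto with wtdb).
Qed.
Lemma dom_realize n t : dom (realize n t) = n. Proof. apply realize_dc. Qed.
Lemma cod_realize n t : cod (realize n t) = 1. Proof. apply realize_dc. Qed.
Lemma wt_realize n t : wt (realize n t). Proof. apply realize_dc. Qed.
#[export] Hint Resolve wt_realize : wtdb.
#[export] Hint Rewrite dom_realize cod_realize : dcdb.

Lemma RT_dc n m F : dom (RT n m F) = n /\ cod (RT n m F) = m /\ wt (RT n m F).
Proof.
  revert F; induction m; intros; simpl; autorewrite with dcdb; auto with wtdb.
  unfold pair; simpl; autorewrite with dcdb. destruct (IHm (fun j => F (S j))) as (a & b & c).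
  rewrite a, b. intuition (try lia; auto with wtdb).
Qed.
Lemma dom_RT n m F : dom (RT n m F) = n. Proof. apply RT_dc. Qed.
Lemma cod_RT n m F : cod (RT n m F) = m. Proof. apply RT_dc. Qed.
Lemma wt_RT n m F : wt (RT n m F). Proof. apply RT_dc. Qed.
#[export] Hint Resolve wt_RT : wtdb.
#[export] Hint Rewrite dom_RT cod_RT : dcdb.

Lemma RT_ext n m F G : (forall j, j < m -> F j = G j) -> RT n m F = RT n m G.
Proof.
  revert F G; induction m; intros; simpl; auto.
  rewrite H by lia. f_equal. apply IHm. intros; apply H; lia.
Qed.

Lemma realize_V n i : i < n -> realize n (V i) = proj n i.
Proof. intros; simpl; destruct (Nat.ltb_spec i n); auto; lia. Qed.


Definition projOK (P : circ) (n k : nat) (s : nat -> tm) : Prop :=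
  wt P /\ dom P = n /\ cod P = k /\
  (forall i, i < k -> eqW (Comp P (proj k i)) (realize n (s i))).

Lemma GL_t P n k s : projOK P n k s -> forall t, vb k t ->
  eqW (Comp P (realize k t)) (realize n (subst s t)).
Proof.
  intros (w & d & c & H). induction t; simpl; intros Hv.
  - destruct (Nat.ltb_spec i k); [|lia]. apply H; auto.
  - rewrite <- W_assoc, (W_discard_nat P n k) by auto. reflexivity.
  - rewrite <- W_assoc, (W_discard_nat P n k) by auto. reflexivity.
  - destruct Hv. rewrite <- W_assoc, (K1 P _ _ n k) by (auto; dc). rewrite IHt1, IHt2 by auto. reflexivity.
  - destruct Hv. rewrite <- W_assoc, (K1 P _ _ n k) by (auto; dc). rewrite IHt1, IHt2 by auto. reflexivity.
Qed.

Lemma GL_RT P n k s : projOK P n k s -> forall m G, (forall j, j < m -> vb k (G j)) ->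
  eqW (Comp P (RT k m G)) (RT n m (fun j => subst s (G j))).
Proof.
  intros HP. pose proof HP as (w & d & c & H). induction m; intros G HG; simpl.
  - apply (W_discard_nat P n k); auto.
  - rewrite (K1 P _ _ n k) by (auto; dc). rewrite (GL_t P n k s HP) by (apply HG; lia).
    rewrite IHm by (intros; apply HG; lia). reflexivity.
Qed.

Lemma RT_proj n m F i : i < m -> eqW (Comp (RT n m F) (proj m i)) (realize n (F i)).
Proof.
  revert F i; induction m; intros F i Hi; [lia|]. simpl RT.
  destruct i as [|i].
  - unfold proj. replace (S m - 0 - 1) with m by lia. simpl discard_n.
    rewrite (W_unitl (Id 1)). apply K4a; auto with wtdb; dc.
  - unfold proj. simpl discard_n. replace (S m - S i - 1) with (m - i - 1) by lia.
    rewrite (W_tassoc discard (discard_n i) (Id 1)).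
    rewrite (W_tassoc discard (Tens (discard_n i) (Id 1))).
    rewrite K2 by dc. rewrite <- W_d1.
    rewrite (W_discard_nat (realize n (F 0)) n 1) by (auto with wtdb; dc).
    rewrite PD_l by dc. apply (IHm (fun j => F (S j))). lia.
Qed.

Lemma RT_projOK n m F : projOK (RT n m F) n m F.
Proof. split; [|split; [|split]]; [apply wt_RT|apply dom_RT|apply cod_RT|]. intros; apply RT_proj; auto. Qed.

Lemma WK a c X : dom X = a -> eqW (Comp (Tens (Id a) (discard_n c)) X) (Tens X (discard_n c)).
Proof.
  intros. transitivity (Comp (Tens (Id a) (discard_n c)) (Tens X (Id 0))).
  - rewrite W_unitr. reflexivity.
  - rewrite <- W_inter by dc. rewrite W_idl, W_idr by dc. reflexivity.
Qed.

Lemma SH a c X : dom X = c -> eqW (Comp (Tens (discard_n a) (Id c)) X) (Tens (discard_n a) X).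
Proof.
  intros. transitivity (Comp (Tens (discard_n a) (Id c)) (Tens (Id 0) X)).
  - rewrite W_unitl. reflexivity.
  - rewrite <- W_inter by dc. rewrite W_idl, W_idr by dc. reflexivity.
Qed.

Lemma proj_wk a c i : i < a -> eqW (Comp (Tens (Id a) (discard_n c)) (proj a i)) (proj (a + c) i).
Proof.
  intros. rewrite WK by (apply proj_dc; auto). unfold proj.
  rewrite W_tassoc, <- W_dadd. replace (a + c - i - 1) with (a - i - 1 + c) by lia. reflexivity.
Qed.

Lemma proj_sh a c i : i < c -> eqW (Comp (Tens (discard_n a) (Id c)) (proj c i)) (proj (a + c) (a + i)).
Proof.
  intros. rewrite SH by (apply proj_dc; auto). unfold proj.
  rewrite <- W_tassoc, <- W_tassoc, <- W_dadd. replace (a + c - (a + i) - 1) with (c - i - 1) by lia.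
  reflexivity.
Qed.

Lemma wk_projOK a c : projOK (Tens (Id a) (discard_n c)) (a + c) a V.
Proof.
  split; [|split; [|split]]; [wtac|dc|dc|]. intros. rewrite proj_wk by auto.
  rewrite realize_V by lia. reflexivity.
Qed.

Lemma sh_projOK a c : projOK (Tens (discard_n a) (Id c)) (a + c) c (fun i => V (a + i)).
Proof.
  split; [|split; [|split]]; [wtac|dc|dc|]. intros. rewrite proj_sh by auto.
  rewrite realize_V by lia. reflexivity.
Qed.

Lemma RT_id n : eqW (Id n) (RT n n V).
Proof.
  induction n; [reflexivity|].
  rewrite (U (Id (S n)) (S n) 1 n) by (simpl; auto). rewrite !W_idl by dc.
  simpl RT. apply pair_Proper.
  - unfold proj. replace (S n - 0 - 1) with n by lia.
    simpl discard_n. rewrite W_unitl. reflexivity.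
  - transitivity (Comp (Tens (discard_n 1) (Id n)) (Id n)). { rewrite W_idr by dc; reflexivity. }
    rewrite IHn at 2. rewrite (GL_RT _ _ _ _ (sh_projOK 1 n)) by (simpl; auto). reflexivity.
Qed.

Lemma wk_RT a c : eqW (Tens (Id a) (discard_n c)) (RT (a + c) a V).
Proof.
  transitivity (Comp (Tens (Id a) (discard_n c)) (Id a)). { rewrite W_idr by dc; reflexivity. }
  rewrite RT_id at 2. rewrite (GL_RT _ _ _ _ (wk_projOK a c)) by (simpl; auto).
  reflexivity.
Qed.

Lemma sh_RT a c : eqW (Tens (discard_n a) (Id c)) (RT (a + c) c (fun j => V (a + j))).
Proof.
  transitivity (Comp (Tens (discard_n a) (Id c)) (Id c)). { rewrite W_idr by dc; reflexivity. }
  rewrite RT_id at 2. rewrite (GL_RT _ _ _ _ (sh_projOK a c)) by (simpl; auto).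
  reflexivity.
Qed.

Lemma RT_split N p q H : eqW (RT N (p + q) H) (pair N (RT N p H) (RT N q (fun j => H (p + j)))).
Proof.
  rewrite (U (RT N (p + q) H) N p q) at 1 by (auto with wtdb; dc).
  rewrite wk_RT, sh_RT.
  rewrite (GL_RT _ _ _ _ (RT_projOK N (p + q) H)) by (simpl; intros; lia).
  rewrite (GL_RT _ _ _ _ (RT_projOK N (p + q) H)) by (simpl; intros; lia).
  reflexivity.
Qed.


Definition interp_gen (x : gen) : nat -> tm :=
  match x with
  | g_discard => fun _ => Zr | g_copy => fun _ => V 0 | g_zero => fun _ => Zr
  | g_add => fun _ => Ad (V 0) (V 1) | g_one => fun _ => On | g_and => fun _ => Mu (V 0) (V 1)
  end.

Fixpoint interp (c : circ) : nat -> tm :=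
  match c with
  | Gen x => interp_gen x
  | Id n => V
  | Sym m n => fun j => if j <? n then V (m + j) else V (j - n)
  | Comp f g => fun j => subst (interp f) (interp g j)
  | Tens f g => fun j => if j <? cod f then interp f j
                         else subst (fun i => V (dom f + i)) (interp g (j - cod f))
  end.

Lemma interp_vb c : wt c -> forall j, j < cod c -> vb (dom c) (interp c j).
Proof.
  induction c; simpl; intros w j Hj.
  - destruct g; simpl in *; lia.
  - auto.
  - destruct (Nat.ltb_spec j n0); simpl; lia.
  - destruct w as (w1 & w2 & e). apply vb_subst with (n := dom c2); auto.
    intros; apply IHc1; auto; lia.
  - destruct w as (w1 & w2). destruct (Nat.ltb_spec j (cod c1)).
    + apply vb_mono with (dom c1); auto; lia.
    + apply vb_subst with (n := dom c2). apply IHc2; auto; lia. simpl; intros; lia.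
Qed.

Lemma tens_RT a b c d F G : (forall j, j < b -> vb a (F j)) -> (forall j, j < d -> vb c (G j)) ->
  eqW (Tens (RT a b F) (RT c d G))
      (RT (a + c) (b + d) (fun j => if j <? b then F j else subst (fun i => V (a + i)) (G (j - b)))).
Proof.
  intros HF HG. set (X := Tens (RT a b F) (RT c d G)).
  rewrite (U X (a + c) b d) at 1 by (subst X; wtac; dc).
  subst X. rewrite RT_split. apply pair_Proper.
  - rewrite <- W_inter by dc. rewrite (W_idr b) by dc.
    rewrite (W_discard_nat (RT c d G) c d) by (auto with wtdb; dc).
    rewrite <- (WK a c) by dc. rewrite wk_RT.
    rewrite (GL_RT _ _ _ _ (RT_projOK (a + c) a V)) by auto.
    erewrite RT_ext. reflexivity. intros j Hj; simpl.
    destruct (Nat.ltb_spec j b); [|lia]. apply subst_V.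
  - rewrite <- W_inter by dc. rewrite (W_idr d) by dc.
    rewrite (W_discard_nat (RT a b F) a b) by (auto with wtdb; dc).
    rewrite <- (SH a c) by dc. rewrite sh_RT.
    rewrite (GL_RT _ _ _ _ (RT_projOK (a + c) c (fun j => V (a + j)))) by auto.
    erewrite RT_ext. reflexivity. intros j Hj; simpl.
    destruct (Nat.ltb_spec (b + j) b); [lia|]. replace (b + j - b) with j by lia. reflexivity.
Qed.

Lemma proj10 : eqW (proj 1 0) (Id 1).
Proof. unfold proj; simpl. rewrite W_unitr, W_unitl. reflexivity. Qed.

Lemma proj20 : eqW (proj 2 0) (Tens (Id 1) discard).
Proof. unfold proj; simpl. rewrite W_unitl, W_unitr. reflexivity. Qed.

Lemma proj21 : eqW (proj 2 1) (Tens discard (Id 1)).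
Proof. unfold proj; simpl. rewrite W_unitr, W_unitr. reflexivity. Qed.

Lemma pair2_id : eqW (pair 2 (proj 2 0) (proj 2 1)) (Id 2).
Proof.
  rewrite RT_id. simpl. change (Tens discard (Tens discard (Id 0))) with (discard_n 2).
  rewrite (PD_r 2 (proj 2 1)) by reflexivity. reflexivity.
Qed.

Lemma compl_gen x : eqW (Gen x) (RT (gen_dom x) (gen_cod x) (interp_gen x)).
Proof.
  destruct x; simpl;
  change (Tens discard (Id 0)) with (discard_n 1) in *;
  change (Tens discard (discard_n 1)) with (discard_n 2) in *.
  - symmetry; apply W_d1.
  - rewrite (U copy 1 1 1) at 1 by reflexivity. change (Tens discard (Id 0)) with (discard_n 1). rewrite proj10. rewrite (PD_r 1 (Id 1)) by reflexivity.
    rewrite W_d1, W_copy_unitr, W_copy_unit. reflexivity.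
  - rewrite PD_r by reflexivity. rewrite W_idl by reflexivity. reflexivity.
  - rewrite PD_r by reflexivity. rewrite pair2_id, W_idl by reflexivity. reflexivity.
  - rewrite PD_r by reflexivity. rewrite W_idl by reflexivity. reflexivity.
  - rewrite PD_r by reflexivity. rewrite pair2_id, W_idl by reflexivity. reflexivity.
Qed.

Theorem compl c : wt c -> eqW c (RT (dom c) (cod c) (interp c)).
Proof.
  induction c; intros w.
  - apply compl_gen.
  - apply RT_id.
  - simpl. rename n into m, n0 into n.
    rewrite (U (Sym m n) (m + n) n m) at 1 by (simpl; auto; lia).
    rewrite RT_split. apply pair_Proper.
    + rewrite <- (W_sym_nat (discard_n m) (Id n) 0 n m n) by dc.
      rewrite W_sym_unitl, W_idr by dc. rewrite sh_RT.
      erewrite RT_ext; [reflexivity|]. intros j Hj. cbv beta. destruct (Nat.ltb_spec j n); [reflexivity|lia].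
    + rewrite <- (W_sym_nat (Id m) (discard_n n) m 0 m n) by dc.
      rewrite W_sym_unitr, W_idr by dc. rewrite (Nat.add_comm m n) at 1. rewrite wk_RT.
      rewrite Nat.add_comm.
      erewrite RT_ext; [reflexivity|]. intros j Hj. cbv beta. destruct (Nat.ltb_spec (n + j) n); [lia|].
      f_equal; lia.
  - destruct w as (w1 & w2 & e). simpl.
    transitivity (Comp (RT (dom c1) (cod c1) (interp c1)) (RT (dom c2) (cod c2) (interp c2))).
    { apply Comp_Proper; auto. }
    rewrite <- e. rewrite (GL_RT _ _ _ _ (RT_projOK (dom c1) (cod c1) (interp c1))).
    + reflexivity.
    + intros; rewrite e; apply interp_vb; auto.
  - destruct w as (w1 & w2). simpl.
    transitivity (Tens (RT (dom c1) (cod c1) (interp c1)) (RT (dom c2) (cod c2) (interp c2))).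
    { apply Tens_Proper; auto. }
    rewrite tens_RT by (intros; apply interp_vb; auto). reflexivity.
Qed.


Lemma struct_eq X Y : wt X -> wt Y -> dom X = dom Y -> cod X = cod Y ->
  (forall j, j < cod X -> interp X j = interp Y j) -> eqW X Y.
Proof.
  intros wX wY d c H. rewrite (compl X wX), (compl Y wY). rewrite d, c.
  erewrite RT_ext; [reflexivity|]. intros; apply H; lia.
Qed.

Ltac st := apply struct_eq; [wtac|wtac|dc|dc|
  let j := fresh "j" in let Hj := fresh "Hj" in
  intros j Hj; simpl in Hj;
  let H := fresh in assert (H : j = 0 \/ j = 1 \/ j = 2 \/ j = 3) by lia;
  destruct H as [->|[->|[->| ->]]]; first [reflexivity | lia]].

Lemma RE_inst k l r : vb k l -> vb k r -> eqW (realize k l) (realize k r) ->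
  forall n F, eqW (realize n (subst F l)) (realize n (subst F r)).
Proof.
  intros hl hr H n F.
  rewrite <- (GL_t _ _ _ _ (RT_projOK n k F) l hl), <- (GL_t _ _ _ _ (RT_projOK n k F) r hr).
  rewrite H. reflexivity.
Qed.

Definition p0 := proj 1 0.

Lemma c_add0 : eqW (realize 1 (Ad Zr (V 0))) (realize 1 (V 0)).
Proof.
  simpl. transitivity (Comp (Tens zero (Id 1)) add). { apply Comp_Proper; [st|reflexivity]. }
  rewrite proj10. Wax.
Qed.

Lemma c_mul1 : eqW (realize 1 (Mu On (V 0))) (realize 1 (V 0)).
Proof.
  simpl. transitivity (Comp (Tens one (Id 1)) and_g). { apply Comp_Proper; [st|reflexivity]. }
  rewrite proj10. Wax.
Qed.

Lemma c_addC : eqW (realize 2 (Ad (V 0) (V 1))) (realize 2 (Ad (V 1) (V 0))).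
Proof.
  simpl. transitivity (Comp (Id 2) add). { apply Comp_Proper; [st|reflexivity]. }
  transitivity (Comp sigma add). 2:{ apply Comp_Proper; [st|reflexivity]. }
  rewrite W_idl by reflexivity. symmetry; Wax.
Qed.

Lemma c_mulC : eqW (realize 2 (Mu (V 0) (V 1))) (realize 2 (Mu (V 1) (V 0))).
Proof.
  simpl. transitivity (Comp (Id 2) and_g). { apply Comp_Proper; [st|reflexivity]. }
  transitivity (Comp sigma and_g). 2:{ apply Comp_Proper; [st|reflexivity]. }
  rewrite W_idl by reflexivity. symmetry; Wax.
Qed.

Lemma c_addA : eqW (realize 3 (Ad (Ad (V 0) (V 1)) (V 2))) (realize 3 (Ad (V 0) (Ad (V 1) (V 2)))).
Proof.
  simpl. transitivity (Comp (Tens add (Id 1)) add). { apply Comp_Proper; [st|reflexivity]. }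
  transitivity (Comp (Tens (Id 1) add) add). 2:{ apply Comp_Proper; [st|reflexivity]. }
  Wax.
Qed.

Lemma c_mulA : eqW (realize 3 (Mu (Mu (V 0) (V 1)) (V 2))) (realize 3 (Mu (V 0) (Mu (V 1) (V 2)))).
Proof.
  simpl. transitivity (Comp (Tens and_g (Id 1)) and_g). { apply Comp_Proper; [st|reflexivity]. }
  transitivity (Comp (Tens (Id 1) and_g) and_g). 2:{ apply Comp_Proper; [st|reflexivity]. }
  Wax.
Qed.

Lemma c_distr : eqW (realize 3 (Mu (V 0) (Ad (V 1) (V 2))))
                    (realize 3 (Ad (Mu (V 0) (V 1)) (Mu (V 0) (V 2)))).
Proof.
  simpl. transitivity (Comp (Tens (Id 1) add) and_g). { apply Comp_Proper; [st|reflexivity]. }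
  transitivity (Comp (Comp (Comp (Tens copy (Id 2)) (Tens (Tens (Id 1) sigma) (Id 1))) (Tens and_g and_g)) add).
  { Wax. }
  apply Comp_Proper; [st|reflexivity].
Qed.

Lemma c_char2 : eqW (realize 1 (Ad (V 0) (V 0))) (realize 1 Zr).
Proof.
  simpl. transitivity (Comp copy add). { apply Comp_Proper; [st|reflexivity]. }
  change (Tens discard (Id 0)) with (discard_n 1). rewrite W_d1. Wax.
Qed.

Lemma RE t t' : E t t' -> forall n, eqW (realize n t) (realize n t').
Proof.
  induction 1; intros n.
  - reflexivity.
  - symmetry; auto.
  - etransitivity; eauto.
  - simpl. rewrite IHE1, IHE2. reflexivity.
  - simpl. rewrite IHE1, IHE2. reflexivity.
  - change (realize n (Ad Zr t)) with (realize n (subst (fun _ => t) (Ad Zr (V 0)))).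
    change (realize n t) with (realize n (subst (fun _ => t) (V 0))).
    apply RE_inst with 1; [simpl; intuition lia|simpl; intuition lia|apply c_add0].
  - pose (F := fun i => match i with 0 => s | _ => t end).
    change (realize n (Ad s t)) with (realize n (subst F (Ad (V 0) (V 1)))).
    change (realize n (Ad t s)) with (realize n (subst F (Ad (V 1) (V 0)))).
    apply RE_inst with 2; [simpl; intuition lia|simpl; intuition lia|apply c_addC].
  - pose (F := fun i => match i with 0 => s | 1 => t | _ => u end).
    change (realize n (Ad (Ad s t) u)) with (realize n (subst F (Ad (Ad (V 0) (V 1)) (V 2)))).
    change (realize n (Ad s (Ad t u))) with (realize n (subst F (Ad (V 0) (Ad (V 1) (V 2))))).
    apply RE_inst with 3; [simpl; intuition lia|simpl; intuition lia|apply c_addA].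
  - change (realize n (Mu On t)) with (realize n (subst (fun _ => t) (Mu On (V 0)))).
    change (realize n t) with (realize n (subst (fun _ => t) (V 0))).
    apply RE_inst with 1; [simpl; intuition lia|simpl; intuition lia|apply c_mul1].
  - pose (F := fun i => match i with 0 => s | _ => t end).
    change (realize n (Mu s t)) with (realize n (subst F (Mu (V 0) (V 1)))).
    change (realize n (Mu t s)) with (realize n (subst F (Mu (V 1) (V 0)))).
    apply RE_inst with 2; [simpl; intuition lia|simpl; intuition lia|apply c_mulC].
  - pose (F := fun i => match i with 0 => s | 1 => t | _ => u end).
    change (realize n (Mu (Mu s t) u)) with (realize n (subst F (Mu (Mu (V 0) (V 1)) (V 2)))).
    change (realize n (Mu s (Mu t u))) with (realize n (subst F (Mu (V 0) (Mu (V 1) (V 2))))).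
    apply RE_inst with 3; [simpl; intuition lia|simpl; intuition lia|apply c_mulA].
  - pose (F := fun i => match i with 0 => s | 1 => t | _ => u end).
    change (realize n (Mu s (Ad t u))) with (realize n (subst F (Mu (V 0) (Ad (V 1) (V 2))))).
    change (realize n (Ad (Mu s t) (Mu s u))) with (realize n (subst F (Ad (Mu (V 0) (V 1)) (Mu (V 0) (V 2))))).
    apply RE_inst with 3; [simpl; intuition lia|simpl; intuition lia|apply c_distr].
  - change (realize n (Ad t t)) with (realize n (subst (fun _ => t) (Ad (V 0) (V 0)))).
    change (realize n Zr) with (realize n (subst (fun _ => t) Zr)).
    apply RE_inst with 1; [simpl; intuition lia|simpl; intuition lia|apply c_char2].
Qed.

Lemma RT_extE n m F G : (forall j, j < m -> E (F j) (G j)) -> eqW (RT n m F) (RT n m G).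
Proof.
  revert F G; induction m; intros F G H; simpl; [reflexivity|].
  rewrite (RE _ _ (H 0 ltac:(lia))). rewrite (IHm (fun j => F (S j)) (fun j => G (S j))).
  reflexivity. intros; apply H; lia.
Qed.


Ltac ltb_loop := repeat (simpl; match goal with
  | |- context [?a <? ?b] => destruct (Nat.ltb_spec a b); try lia
  end).

Lemma interp_copy_n n j : j < n + n -> interp (copy_n n) j = V (if j <? n then j else j - n).
Proof.
  revert j; induction n; intros j Hj; [lia|].
  simpl interp.
  repeat (simpl; first [ match goal with
  | |- context [?a <? ?b] => destruct (Nat.ltb_spec a b); try lia
  end | rewrite IHn by lia ]); f_equal; lia.
Qed.

Lemma subst_ext_all s r t : (forall i, s i = r i) -> subst s t = subst r t.
Proof. induction t; simpl; intros; f_equal; auto. Qed.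

Ltac ltb_all := repeat (simpl; match goal with
  | |- context [?a <? ?b] => destruct (Nat.ltb_spec a b); try lia
  end).

Lemma EV a b : a = b -> E (V a) (V b).
Proof. intros ->; reflexivity. Qed.
Ltac vfin := first [reflexivity | apply EV; lia].

Lemma ax_sound f g : ax f g -> wt f -> wt g -> dom f = dom g -> cod f = cod g ->
  forall j, j < cod f -> E (interp f j) (interp g j).
Proof.
  intros Hax wf wg hd hc j Hj.
  destruct Hax; simpl in *.
  - rewrite subst_subst; reflexivity.
  - rewrite subst_V; reflexivity.
  - reflexivity.
  -
    destruct wf as ((w1 & w2 & e1) & (w3 & w4 & e2)).
    destruct (Nat.ltb_spec j (cod g)).
    + erewrite (subst_ext_vb (dom g)); [reflexivity| apply interp_vb; auto |].
      intros i Hi. simpl. destruct (Nat.ltb_spec i (cod f)); [reflexivity|lia].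
    + rewrite !subst_subst. simpl.
      erewrite (subst_ext_all _ _ (interp k (j - cod g))); [reflexivity|].
      intros i. cbv beta. destruct (Nat.ltb_spec (dom g + i) (cod f)); [lia|].
      replace (dom g + i - cod f) with i by lia. reflexivity.
  -
    ltb_all; vfin.
  -
    ltb_all; try reflexivity.
    + replace (j - cod f - cod g) with (j - (cod f + cod g)) by lia.
      rewrite subst_subst. simpl. erewrite subst_ext_all; [reflexivity|].
      intros; simpl; f_equal; lia.
  -
    rewrite Nat.sub_0_r. rewrite (subst_ext_all _ V) by reflexivity. rewrite subst_V; reflexivity.
  -
    destruct (Nat.ltb_spec j (cod f)); [reflexivity|lia].
  -
    ltb_all; vfin.
  -
    destruct wf as ((w1 & w2) & _).
    destruct (Nat.ltb_spec j (cod g)).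
    + ltb_all. replace (cod f + j - cod f) with j by lia.
      erewrite (subst_ext_vb (dom g) _ _ (interp g j)); [reflexivity|apply interp_vb; auto|].
      intros i Hi. simpl. destruct (Nat.ltb_spec i (dom g)); [reflexivity|lia].
    + ltb_all. rewrite subst_subst. simpl.
      erewrite (subst_ext_all _ V); [rewrite subst_V; reflexivity|].
      intros i. destruct (Nat.ltb_spec (dom g + i) (dom g)); [lia|]. f_equal; lia.
  -
    ltb_all; vfin.
  -
    ltb_all; vfin.
  - ltb_all; vfin.
  - ltb_all; vfin.
  - destruct j as [|[|]]; simpl; try lia; reflexivity.
  - destruct j as [|[|[|]]]; simpl; try lia; reflexivity.
  - destruct j as [|]; simpl; try lia; reflexivity.
  -
    destruct wf as (w1 & _). rewrite cod_copy_n in Hj.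
    rewrite interp_copy_n by lia.
    assert (HC : forall i, i < dom f -> interp (copy_n (dom f)) i = V i).
    { intros i Hi. rewrite interp_copy_n by lia. destruct (Nat.ltb_spec i (dom f)); [reflexivity|lia]. }
    destruct (Nat.ltb_spec j (cod f)); simpl.
    + rewrite (subst_id_vb (dom f)); [reflexivity|apply interp_vb; auto|auto].
    + rewrite subst_subst. simpl. rewrite (subst_id_vb (dom f)); [reflexivity|apply interp_vb; auto; lia|].
      intros i Hi. rewrite interp_copy_n by lia. destruct (Nat.ltb_spec (dom f + i) (dom f)); [lia|].
      f_equal; lia.
  - rewrite cod_discard_n in Hj; lia.
  - destruct j as [|]; simpl; try lia. ring.
  - destruct j as [|]; simpl; try lia. ring.
  - destruct j as [|]; simpl; try lia. ring.
  - destruct j as [|]; simpl; try lia. ring.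
  - destruct j as [|]; simpl; try lia. ring.
  - destruct j as [|]; simpl; try lia. ring.
  - destruct j as [|]; simpl; try lia. ring.
  - destruct j as [|]; simpl; try lia. ring.
  - destruct j as [|]; simpl; try lia. apply E_char2.
  - destruct j as [|]; simpl; try lia. ring.
Qed.

Theorem sound c d : eqA c d -> forall j, j < cod c -> E (interp c j) (interp d j).
Proof.
  induction 1; intros j Hj.
  - apply ax_sound; auto.
  - reflexivity.
  - destruct (eqA_wt _ _ H) as (_ & _ & _ & e). symmetry; apply IHeqA; lia.
  - destruct (eqA_wt _ _ H) as (_ & _ & _ & e). rewrite IHeqA1, IHeqA2 by lia. reflexivity.
  - destruct (eqA_wt _ _ H) as (wf & wf' & df & cf).
    destruct (eqA_wt _ _ H0) as (wg & wg' & dg & cg). simpl in *.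
    rewrite (subst_E (interp f) _ _ (IHeqA2 j Hj)).
    apply (subst_extE (dom g')); [apply interp_vb; auto; lia|].
    intros; apply IHeqA1; lia.
  - destruct (eqA_wt _ _ H) as (wf & wf' & df & cf).
    destruct (eqA_wt _ _ H0) as (wg & wg' & dg & cg). simpl in *.
    rewrite <- cf, <- df. destruct (Nat.ltb_spec j (cod f)).
    + apply IHeqA1; auto.
    + apply subst_E. apply IHeqA2; lia.
Qed.


Definition RD (n m : nat) (F : nat -> tm) : nat -> tm :=
  fun i => sumT m (fun j => Mu (deriv i (F j)) (V (n + j))).

Lemma Rt_dc f : wt f -> wt (Rt f) /\ dom (Rt f) = dom f + cod f /\ cod (Rt f) = dom f.
Proof.
  induction f; simpl; intros w.
  - destruct g; simpl; repeat split; auto.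
  - autorewrite with dcdb; repeat split; auto with wtdb.
  - autorewrite with dcdb; repeat split; auto with wtdb; lia.
  - destruct w as (w1 & w2 & e). destruct (IHf1 w1) as (a1 & b1 & c1). destruct (IHf2 w2) as (a2 & b2 & c2).
    autorewrite with dcdb. rewrite b1, c1, b2, c2. repeat split; auto with wtdb; lia.
  - destruct w as (w1 & w2). destruct (IHf1 w1) as (a1 & b1 & c1). destruct (IHf2 w2) as (a2 & b2 & c2).
    rewrite b1, c1, b2, c2. repeat split; auto; lia.
Qed.

Lemma chain i b F t : vb b t ->
  E (deriv i (subst F t)) (sumT b (fun k => Mu (subst F (deriv k t)) (deriv i (F k)))).
Proof.
  induction t; simpl; intros Hv.
  - symmetry. rewrite (sumT_delta b _ i0).
    + rewrite Nat.eqb_refl. simpl. ring.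
    + auto.
    + intros j Hj Hne. destruct (Nat.eqb_spec i0 j); [lia|]. simpl. ring.
  - symmetry; apply sumT_zero; intros; simpl; ring.
  - symmetry; apply sumT_zero; intros; simpl; ring.
  - destruct Hv. rewrite IHt1, IHt2 by auto. rewrite <- sumT_add.
    apply sumT_extE; intros; simpl; ring.
  - destruct Hv. rewrite IHt1, IHt2 by auto.
    rewrite <- sumT_mul_r, <- sumT_mul_l, <- sumT_add.
    apply sumT_extE; intros; simpl; ring.
Qed.

Lemma deriv_shift_lo a i t : i < a -> E (deriv i (subst (fun x => V (a + x)) t)) Zr.
Proof.
  intros H. induction t; simpl.
  - destruct (Nat.eqb_spec (a + i0) i); [lia|reflexivity].
  - reflexivity. - reflexivity.
  - rewrite IHt1, IHt2; ring.
  - rewrite IHt1, IHt2; ring.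
Qed.

Lemma deriv_shift a i t : deriv (a + i) (subst (fun x => V (a + x)) t) = subst (fun x => V (a + x)) (deriv i t).
Proof.
  induction t; simpl; try congruence.
  destruct (Nat.eqb_spec (a + i0) (a + i)); destruct (Nat.eqb_spec i0 i); simpl; auto; lia.
Qed.

Lemma Rt_gen x i : i < gen_dom x -> E (interp (Rt (Gen x)) i) (RD (gen_dom x) (gen_cod x) (interp_gen x) i).
Proof.
  unfold RD. destruct x; simpl; intros H; destruct i as [|[|]]; try lia; simpl; ring.
Qed.

Lemma Rt_Id n i : i < n -> E (interp (Rt (Id n)) i) (RD n n (interp (Id n)) i).
Proof.
  intros H. unfold RD. simpl. rewrite cod_discard_n, dom_discard_n. simpl.
  rewrite Nat.sub_0_r. rewrite (sumT_delta n _ i H).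
  - rewrite Nat.eqb_refl. ring.
  - intros j Hj Hne. destruct (Nat.eqb_spec j i); [lia|]. ring.
Qed.

Lemma Rt_Sym m n i : i < m + n -> E (interp (Rt (Sym m n)) i) (RD (m + n) (n + m) (interp (Sym m n)) i).
Proof.
  intros H. unfold RD. simpl. rewrite cod_discard_n, dom_discard_n. simpl.
  rewrite Nat.sub_0_r.
  destruct (Nat.ltb_spec i m).
  - rewrite (sumT_delta (n + m) _ (n + i)); [| lia |].
    + destruct (Nat.ltb_spec (n + i) n); [lia|]. simpl.
      replace (n + i - n) with i by lia. rewrite Nat.eqb_refl.
      transitivity (V (m + n + (n + i))). { apply EV; lia. } ring.
    + intros j Hj Hne. destruct (Nat.ltb_spec j n); simpl.
      * destruct (Nat.eqb_spec (m + j) i); [lia|]. ring.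
      * destruct (Nat.eqb_spec (j - n) i); [lia|]. ring.
  - rewrite (sumT_delta (n + m) _ (i - m)); [| lia |].
    + destruct (Nat.ltb_spec (i - m) n); [|lia]. simpl.
      replace (m + (i - m)) with i by lia. rewrite Nat.eqb_refl.
      transitivity (V (m + n + (i - m))). { apply EV; lia. } ring.
    + intros j Hj Hne. destruct (Nat.ltb_spec j n); simpl.
      * destruct (Nat.eqb_spec (m + j) i); [lia|]. ring.
      * destruct (Nat.eqb_spec (j - n) i); [lia|]. ring.
Qed.

Lemma subst_sumT s m f : subst s (sumT m f) = sumT m (fun j => subst s (f j)).
Proof. induction m; simpl; congruence. Qed.

Ltac ltb_cp := repeat (simpl; first [ match goal with
  | |- context [?a <? ?b] => destruct (Nat.ltb_spec a b); try lia
  end | rewrite interp_copy_n by lia ]).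

Lemma Rt_Comp f g : wt f -> wt g -> cod f = dom g ->
  (forall i, i < dom f -> E (interp (Rt f) i) (RD (dom f) (cod f) (interp f) i)) ->
  (forall i, i < dom g -> E (interp (Rt g) i) (RD (dom g) (cod g) (interp g) i)) ->
  forall i, i < dom f -> E (interp (Rt (Comp f g)) i) (RD (dom f) (cod g) (interp (Comp f g)) i).
Proof.
  intros wf wg e IHf IHg i Hi.
  set (a := dom f) in *. set (b := cod f) in *. set (c := cod g) in *.
  set (X1 := Tens (copy_n a) (Id c)).
  set (X2 := Tens (Tens (Id a) f) (Id c)).
  set (X3 := Tens (Id a) (Rt g)).
  set (s2 := interp (Comp X1 X2)).
  set (s3 := interp (Comp (Comp X1 X2) X3)).
  change (interp (Rt (Comp f g)) i) with (subst s3 (interp (Rt f) i)).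
  assert (S2a : forall k, k < a -> s2 k = V k).
  { intros k Hk. subst s2 X1 X2. simpl. rewrite dom_copy_n, cod_copy_n. fold a b. ltb_cp. reflexivity. }
  assert (S2b : forall x, x < b -> s2 (a + x) = interp f x).
  { intros x Hx. subst s2 X1 X2. simpl. rewrite dom_copy_n, cod_copy_n. fold a b.
    destruct (Nat.ltb_spec (a + x) (a + b)); [|lia]. destruct (Nat.ltb_spec (a + x) a); [lia|].
    replace (a + x - a) with x by lia. rewrite subst_subst.
    apply (subst_id_vb a). { apply interp_vb; auto. }
    intros y Hy. ltb_cp. f_equal; lia. }
  assert (S2c : forall l, s2 (a + b + l) = V (a + l)).
  { intros l. subst s2 X1 X2. simpl. rewrite dom_copy_n, cod_copy_n. fold a b. ltb_cp. f_equal; lia. }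
  assert (S3a : forall k, k < a -> s3 k = V k).
  { intros k Hk. subst s3 X3. change (subst s2 (interp (Tens (Id a) (Rt g)) k) = V k). simpl.
    destruct (Nat.ltb_spec k a); [|lia]. apply S2a; auto. }
  assert (S3b : forall k, s3 (a + k) = subst (fun x => s2 (a + x)) (interp (Rt g) k)).
  { intros k. subst s3 X3. change (subst s2 (interp (Tens (Id a) (Rt g)) (a + k)) = subst (fun x => s2 (a + x)) (interp (Rt g) k)). simpl.
    destruct (Nat.ltb_spec (a + k) a); [lia|]. replace (a + k - a) with k by lia.
    rewrite subst_subst. reflexivity. }
  rewrite (subst_E s3 _ _ (IHf i Hi)). unfold RD. rewrite subst_sumT.
  simpl interp at 2.
  transitivity (sumT b (fun k => Mu (deriv i (interp f k))
      (sumT c (fun l => Mu (subst (interp f) (deriv k (interp g l))) (V (a + l)))))).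
  - apply sumT_extE. intros k Hk. simpl. apply E_Mu.
    + rewrite (subst_id_vb a); [reflexivity| |auto]. apply vb_deriv, interp_vb; auto.
    + rewrite S3b. rewrite e in Hk. rewrite (subst_E _ _ _ (IHg k Hk)). unfold RD.
      rewrite subst_sumT. apply sumT_extE. intros l Hl. simpl. apply E_Mu.
      * rewrite (subst_ext_vb b _ (interp f)); [reflexivity| |].
        -- rewrite e. apply vb_deriv, interp_vb; auto.
        -- intros; apply S2b; auto.
      * rewrite <- e. fold b. replace (a + (b + l)) with (a + b + l) by lia. rewrite S2c. reflexivity.
  - symmetry. transitivity (sumT c (fun l => Mu (sumT b (fun k => Mu (subst (interp f) (deriv k (interp g l))) (deriv i (interp f k)))) (V (a + l)))).
    + apply sumT_extE. intros l Hl. rewrite (chain i b). reflexivity. rewrite e. apply interp_vb; auto.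
    + transitivity (sumT c (fun l => sumT b (fun k => Mu (Mu (subst (interp f) (deriv k (interp g l))) (deriv i (interp f k))) (V (a + l))))).
      { apply sumT_extE. intros l Hl. rewrite sumT_mul_r. reflexivity. }
      rewrite sumT_exch. apply sumT_extE. intros k Hk. rewrite <- sumT_mul_l.
      apply sumT_extE. intros l Hl. ring.
Qed.

Lemma Rt_Tens f g : wt f -> wt g ->
  (forall i, i < dom f -> E (interp (Rt f) i) (RD (dom f) (cod f) (interp f) i)) ->
  (forall i, i < dom g -> E (interp (Rt g) i) (RD (dom g) (cod g) (interp g) i)) ->
  forall i, i < dom f + dom g -> E (interp (Rt (Tens f g)) i) (RD (dom f + dom g) (cod f + cod g) (interp (Tens f g)) i).
Proof.
  intros wf wg IHf IHg i Hi.
  destruct (Rt_dc f wf) as (_ & df & cf). destruct (Rt_dc g wg) as (_ & dg & cg).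
  set (a := dom f) in *. set (b := cod f) in *. set (c := dom g) in *. set (d := cod g) in *.
  set (P := interp (Tens (Tens (Id a) (Sym c b)) (Id d))).
  change (interp (Rt (Tens f g)) i) with (subst P (interp (Tens (Rt f) (Rt g)) i)).
  assert (P1 : forall k, k < a -> P k = V k).
  { intros k Hk. subst P. ltb_all. reflexivity. }
  assert (P2 : forall x, x < b -> P (a + x) = V (a + c + x)).
  { intros x Hx. subst P. ltb_all. simpl. f_equal; lia. }
  assert (P3 : forall x, x < c -> P (a + b + x) = V (a + x)).
  { intros x Hx. subst P. ltb_all. simpl. f_equal; lia. }
  assert (P4 : forall y, P (a + b + c + y) = V (a + c + b + y)).
  { intros y. subst P. ltb_all. simpl. f_equal; lia. }
  unfold RD. rewrite sumT_split. simpl interp at 1. rewrite cf, df.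
  destruct (Nat.ltb_spec i a).
  - rewrite (subst_E P _ _ (IHf i ltac:(lia))). unfold RD. rewrite subst_sumT.
    rewrite (sumT_zero d); [rewrite E_addC, E_add0|].
    + apply sumT_extE. intros k Hk. simpl. fold a b c d. destruct (Nat.ltb_spec k b); [|lia]. apply E_Mu.
      * rewrite (subst_id_vb a); [reflexivity| |auto]. apply vb_deriv, interp_vb; auto.
      * rewrite P2 by auto. reflexivity.
    + intros j Hj. simpl. fold a b c d. destruct (Nat.ltb_spec (b + j) b); [lia|].
      rewrite deriv_shift_lo by auto. ring.
  - rewrite subst_subst. simpl. fold a b c d.
    set (i' := i - a).
    replace i with (a + i') in * by lia.
    assert (Hi' : i' < c) by lia.
    rewrite (subst_E _ _ _ (IHg i' Hi')). unfold RD. rewrite subst_sumT.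
    rewrite (sumT_zero b); [rewrite E_add0|].
    + apply sumT_extE. intros k Hk. simpl. fold a b c d. destruct (Nat.ltb_spec (b + k) b); [lia|].
      replace (b + k - b) with k by lia. rewrite deriv_shift. apply E_Mu.
      * rewrite (subst_ext_vb c _ (fun x => V (a + x))); [reflexivity| |].
        -- apply vb_deriv, interp_vb; auto.
        -- intros x Hx. replace (a + b + x) with (a + b + x) by lia. apply P3; auto.
      * replace (a + b + (c + k)) with (a + b + c + k) by lia. rewrite P4. apply EV; lia.
    + intros j Hj. simpl. fold a b c d. destruct (Nat.ltb_spec j b); [|lia].
      rewrite (deriv_out a) by (try apply interp_vb; auto; lia). ring.
Qed.


Theorem Rt_interp f : wt f -> forall i, i < dom f -> E (interp (Rt f) i) (RD (dom f) (cod f) (interp f) i).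
Proof.
  induction f; intros w.
  - apply Rt_gen.
  - apply Rt_Id.
  - apply Rt_Sym.
  - destruct w as (w1 & w2 & e). exact (Rt_Comp f1 f2 w1 w2 e (IHf1 w1) (IHf2 w2)).
  - destruct w as (w1 & w2). exact (Rt_Tens f1 f2 w1 w2 (IHf1 w1) (IHf2 w2)).
Qed.

Lemma RD_E n m F G : (forall j, j < m -> E (F j) (G j)) -> forall i, E (RD n m F i) (RD n m G i).
Proof.
  intros H i. unfold RD. apply sumT_extE. intros j Hj. rewrite (deriv_E i _ _ (H j Hj)). reflexivity.
Qed.

Theorem mainTheorem3 (a b : nat) (c d : circ) :
  is_circuit a b c -> is_circuit a b d -> eqA c d -> eqA (Rt c) (Rt d).
Proof.
  intros (wc & dc & cc) (wd & dd & cd) H.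
  destruct (Rt_dc c wc) as (wrc & drc & crc). destruct (Rt_dc d wd) as (wrd & drd & crd).
  apply eqW_eqA; [|auto].
  rewrite (compl (Rt c) wrc), (compl (Rt d) wrd).
  rewrite drc, crc, drd, crd, dc, cc, dd, cd.
  apply RT_extE. intros i Hi.
  rewrite (Rt_interp c wc i) by lia. rewrite (Rt_interp d wd i) by lia.
  rewrite dc, cc, dd, cd. apply RD_E. intros j Hj.
  apply sound; auto. lia.
Qed.
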